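(* Let $G=A\rtimes H$ be a semi-direct product of a finite abelian group $A$ and a finite group $H$ such that the action homomorphism $H\to\mathrm{Aut}(A)$ is injective. Let $(\pi,V)$ be a faithful representation of $G$ over $\mathbb{C}$. Then, via its permutation action on the one-dimensional $A$-irreducible constituents of $V$, $H$ admits an injective homomorphism $H\to S_{p}$ with $p=\dim_{\mathbb{C}}V$. Consequently $\mathrm{mdim}_{\mathbb{C}}(G)\ge\mu(H)$.
   Context: For a finite group $G$ and a field $F$, $\mathrm{mdim}_F(G)$ denotes the smallest dimension of a faithful representation of $G$ over $F$. For a finite group $H$, the minimal permutation degree $\mu(H)$ is the smallest $n$ such that $H$ embeds as a subgroup of the symmetric group $S_n$. *)

(* Defs.v *)
From mathcomp Require Import all_boot all_algebra all_fingroup all_solvable all_field all_character.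
Set Implicit Arguments. Unset Strict Implicit. Unset Printing Implicit Defensive.
Local Open Scope group_scope.

(* Over the field algC (complex algebraic numbers, the canonical model of C
   for the character theory of finite groups). *)

Definition has_faithful_rep (gT : finGroupType) (G : {group gT}) (n : nat) : Prop :=
  exists rG : mx_representation algC G n, mx_faithful rG.

Definition is_mdimC (gT : finGroupType) (G : {group gT}) (d : nat) : Prop :=
  has_faithful_rep G d /\ forall m, has_faithful_rep G m -> d <= m.

Definition embeds_in_Sym (gT : finGroupType) (H : {group gT}) (n : nat) : Prop :=
  exists f : {morphism H >-> {perm 'I_n}}, 'injm f.

Definition is_min_perm_degree (gT : finGroupType) (H : {group gT}) (m : nat) : Prop :=
  embeds_in_Sym H m /\ forall n, embeds_in_Sym H n -> m <= n.

(* Main.v *)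
Require Import Defs.
From mathcomp Require Import all_boot all_algebra all_fingroup all_solvable all_field all_character.
Set Implicit Arguments. Unset Strict Implicit. Unset Printing Implicit Defensive.
Import GRing.Theory Num.Theory.
Local Open Scope group_scope.

Section Gen.
Variables (gT : finGroupType) (H : {group gT}) (T : finType) (x0 : T) (S : {set T})
  (f : T -> gT -> T) (p : nat).
Hypothesis fM : {in H &, forall g h x, f x (g*h) = f (f x g) h}.
Hypothesis fS : {in H, forall h, {in S, forall x, f x h \in S}}.
Hypothesis fInj : forall h, injective (f^~ h).
Hypothesis faith : forall h, h \in H -> {in S, forall x, f x h = x} -> h = 1.
Hypothesis card : #|S| <= p.

Let s := enum S.
Let k := size s.
Let ks : k = #|S|. Proof. by rewrite /k -cardE. Qed.

Definition sn h (i : nat) := if (h \in H) && (i < k) then index (f (nth x0 s i) h) s else i.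

Let nth_in i : i < k -> nth x0 s i \in S.
Proof. by move=> ik; rewrite -mem_enum; apply: mem_nth. Qed.

Let f_in h i : h \in H -> i < k -> f (nth x0 s i) h \in s.
Proof. by move=> Hh ik; rewrite mem_enum fS // nth_in. Qed.

Lemma sn_lt h i : (sn h i < k) = (i < k).
Proof.
rewrite /sn; case: (boolP (h \in H)) => //= Hh; case: (boolP (i < k)) => ik.
  by rewrite index_mem f_in.
by rewrite (negbTE ik).
Qed.

Lemma sn_inj h : injective (sn h).
Proof.
move=> i j; rewrite /sn; case: (boolP (h \in H)) => //= Hh.
case: (boolP (i < k)) => ik; case: (boolP (j < k)) => jk.
- move=> e; have := congr1 (nth x0 s) e; rewrite !nth_index ?f_in //.
  move/fInj => e2; apply/eqP; rewrite -(nth_uniq x0 ik jk (enum_uniq _)) e2 //.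
- move=> e; move: jk; rewrite -e index_mem f_in //.
- move=> e; move: ik; rewrite e index_mem f_in //.
- by [].
Qed.

Lemma sn_lt_p h (i : 'I_p) : sn h i < p.
Proof.
case: (ltnP i k) => ik; last by rewrite /sn (ltnNge i k) ik andbF ltn_ord.
by apply: leq_trans (card); rewrite -ks sn_lt.
Qed.

Definition sig h (i : 'I_p) : 'I_p := Ordinal (sn_lt_p h i).

Lemma sig_inj h : injective (sig h).
Proof. by move=> i j /(congr1 val) /= /sn_inj /val_inj. Qed.

Definition sigp h : {perm 'I_p} := perm (@sig_inj h).

Lemma sn_M g h i : g \in H -> h \in H -> sn (g * h) i = sn h (sn g i).
Proof.
move=> Hg Hh; rewrite /sn groupM // Hg Hh /=.
case: (boolP (i < k)) => ik; last by rewrite (negbTE ik).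
by rewrite index_mem f_in // nth_index ?f_in // fM.
Qed.

Lemma sigpM : {in H &, {morph sigp : x y / x * y}}.
Proof.
move=> g h Hg Hh; apply/permP => i; apply: val_inj.
by rewrite permM !permE /= sn_M.
Qed.

Canonical sig_morph := Morphism sigpM.

Lemma sig_injm : 'injm sig_morph.
Proof.
apply/subsetP => h; rewrite !inE => /andP[Hh /eqP e1]; apply/eqP; apply: faith => // x xS.
have xs : x \in s by rewrite mem_enum.
have ik : index x s < p by rewrite (leq_trans _ card) // -ks index_mem.
have := congr1 (fun q : {perm 'I_p} => val (q (Ordinal ik))) e1.
rewrite perm1 permE /= /sn Hh index_mem xs /= nth_index // => e.
by have := congr1 (nth x0 s) e; rewrite !nth_index // mem_enum fS.
Qed.

Lemma gen_embed : embeds_in_Sym H p.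
Proof. by exists sig_morph; apply: sig_injm. Qed.
End Gen.




Theorem theorem4p4 (gT : finGroupType) (G A H : {group gT})
    (sdpG : (A ><| H)%g = G) (abA : abelian A)
    (faithful_action : ('C_H(A))%g = 1%g) :
  (forall (p : nat) (rG : mx_representation algC G p),
      mx_faithful rG -> embeds_in_Sym H p)
  /\ (forall d m : nat, is_mdimC G d -> is_min_perm_degree H m -> m <= d).
Proof.
Local Open Scope ring_scope.
have [nsAG sHG _ nAH _] := sdprod_context sdpG.
have sAG : A \subset G by case/andP: nsAG.
have part1 : forall (p : nat) (rG : mx_representation algC G p),
      mx_faithful rG -> embeds_in_Sym H p.
  move=> p rG ffG.
  pose chi := cfRepr rG.
  pose phiA := ('Res[A] chi)%R.
  have Nphi : phiA \is a character by apply: cfRes_char; apply: cfRepr_char.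
  have lin : forall i : Iirr A, 'chi_i \is a linear_char by apply/char_abelianP.
  pose S := [set i : Iirr A | i \in irr_constt phiA].
  have phi_sum : forall x, x \in A -> phiA x = \sum_(i in S) '[phiA, 'chi_i] * 'chi_i x.
    move=> x Ax; rewrite {1}(cfun_sum_constt phiA) sum_cfunE.
    by apply: eq_big => [i|i _]; rewrite ?inE ?cfunE.
  apply: (@gen_embed _ H _ 0 S (fun i y => conjg_Iirr i y)).
  - move=> g h Hg Hh i; apply: irr_inj; rewrite !conjg_IirrE.
    by rewrite cfConjgMnorm // (subsetP nAH).
  - move=> h Hh i; rewrite !inE conjg_IirrE.
    by rewrite cfdot_Res_conjg // (subsetP sHG).
  - by move=> h; apply: conjg_Iirr_inj.
  - move=> h Hh hfix.
    have: h \in 'C_H(A).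
      rewrite inE Hh; apply/centP => a Aa.
      have Aah : (a ^ h)%g \in A by rewrite memJ_norm ?(subsetP nAH).
      have chiJ : forall i, i \in S -> 'chi_i (a ^ h)%g = 'chi_i a.
        by move=> i iS; rewrite -{1}(hfix i iS) conjg_IirrE cfConjgEJ // (subsetP nAH).
      pose b := (a ^ h * a^-1)%g.
      have Ab : b \in A by rewrite groupM ?groupV.
      have chib : forall j, j \in S -> 'chi_j b = 1.
        move=> j jS; rewrite lin_charM ?groupV // chiJ // -lin_charM ?groupV //.
        by rewrite mulgV lin_char1.
      have: b \in cfker phiA.
        rewrite cfkerEchar // inE Ab phi_sum // [phiA 1%g]phi_sum //.
        by apply/eqP/eq_bigr => i iS; rewrite chib // lin_char1.
      rewrite cfker_Res ?cfRepr_char // cfker_repr => /setIP[_ /(subsetP ffG) /set1P b1].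
      have e : (a ^ h)%g = a.
        by have := congr1 (fun z => z * a)%g b1; rewrite mulgKV mul1g.
      by apply: commute_sym; apply/commgP; apply/conjg_fixP.
    by rewrite faithful_action => /set1P.
  - rewrite -(@ler_nat algC).
    have -> : (p%:R : algC) = phiA 1%g by rewrite cfRes1 cfRepr1.
    rewrite phi_sum // -sumr_const; apply: ler_sum => i iS.
    rewrite lin_char1 // mulr1.
    have := Cnat_cfdot_char_irr i Nphi; move: iS; rewrite inE => nz.
    case/natrP => n en; rewrite en in nz *; rewrite ler1n lt0n.
    by move: nz; rewrite irr_consttE en pnatr_eq0.
split=> //.
by move=> d m [[rG ffG] _] [_ minm]; exact: minm _ (part1 _ _ ffG).
Qed.
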